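(* Fix $\nu>1$ and $F>2$. Let $\gamma_{1,+}(\lambda,\eta)$ denote an eigenvalue of smallest real part of the matrix $G(+\infty;\lambda,\eta)$. Then $\Re\gamma_{1,+}(\lambda,\eta)$ is bounded from below on $\{(\lambda,\eta):\Re\lambda\ge0,\ \eta\in\mathbb{R}\}$.
   Context: Set $H=\nu^{-2}$, $Q=\nu^{-3}$, $s=\frac{\nu^2+\nu+1}{\nu(\nu+1)}$, and $A_1=\begin{pmatrix}-s&1&0\\ H/F^2-Q^2/H^2&2Q/H-s&0\\0&0&Q/H-s\end{pmatrix}$, $A_2=\begin{pmatrix}0&0&1\\0&0&Q/H\\ H/F^2&0&0\end{pmatrix}$, $E=\begin{pmatrix}0&0&0\\ 2Q^2/H^3+1&-2Q/H^2&0\\0&0&-Q/H^2\end{pmatrix}$ (here $A_1$ is invertible since $F\ne(\nu+1)/\nu^2$), and $G(+\infty;\lambda,\eta)=(E-\lambda I-i\eta A_2)A_1^{-1}$. This is the limiting matrix at the downstream endstate of a hydraulic shock of the inviscid Saint-Venant equations with Froude number $F$ and endstates $(1,1,0)$, $(\nu^{-2},\nu^{-3},0)$. *)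

(* Defs.v *)
From HB Require Import structures.
From mathcomp Require Import all_boot all_order all_algebra.
From mathcomp Require Import complex.
Set Implicit Arguments. Unset Strict Implicit. Unset Printing Implicit Defensive.
Import Order.TTheory GRing.Theory Num.Theory.
Local Open Scope ring_scope.

Section SV.
Variable R : rcfType.
Variables (nu F : R).

(* Downstream endstate and the auxiliary constant s. *)
Definition svH : R := nu ^-2.
Definition svQ : R := nu ^- 3.
Definition svs : R := (nu ^+ 2 + nu + 1) / (nu * (nu + 1)).

Definition svA1 : 'M[R]_3 :=
  \matrix_(i < 3, j < 3)
    match nat_of_ord i, nat_of_ord j with
    | 0, 0 => - svs
    | 0, 1 => 1
    | 1, 0 => svH / F ^+ 2 - svQ ^+ 2 / svH ^+ 2
    | 1, 1 => 2 * svQ / svH - svs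
    | 2, 2 => svQ / svH - svs
    | _, _ => 0
    end.

Definition svA2 : 'M[R]_3 :=
  \matrix_(i < 3, j < 3)
    match nat_of_ord i, nat_of_ord j with
    | 0, 2 => 1
    | 1, 2 => svQ / svH
    | 2, 0 => svH / F ^+ 2
    | _, _ => 0
    end.

Definition svE : 'M[R]_3 :=
  \matrix_(i < 3, j < 3)
    match nat_of_ord i, nat_of_ord j with
    | 1, 0 => 2 * svQ ^+ 2 / svH ^+ 3 + 1
    | 1, 1 => - (2 * svQ / svH ^+ 2)
    | 2, 2 => - (svQ / svH ^+ 2)
    | _, _ => 0
    end.

Local Notation toC := (fun x : R => x%:C%C).

Definition Gplus (lambda : R[i]) (eta : R) : 'M[R[i]]_3 :=
  (map_mx toC svE - lambda%:M - ('i%C * (eta%:C)%C) *: map_mx toC svA2)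
    *m invmx (map_mx toC svA1).

End SV.

(* Main.v *)
Set Warnings "-all".
Require Import Defs.
From HB Require Import structures.
From mathcomp Require Import all_boot all_order all_algebra.
From mathcomp Require Import complex.
From mathcomp Require Import ring lra.
Import Order.TTheory GRing.Theory Num.Theory.
Local Open Scope ring_scope.

Section Aux.
Variable R : rcfType.
Implicit Types x y : R[i].
Lemma cReD x y : complex.Re (x + y) = complex.Re x + complex.Re y. Proof. by case: x; case: y. Qed.
Lemma cImD x y : complex.Im (x + y) = complex.Im x + complex.Im y. Proof. by case: x; case: y. Qed.
Lemma cReN x : complex.Re (- x) = - complex.Re x. Proof. by case: x. Qed.
Lemma cImN x : complex.Im (- x) = - complex.Im x. Proof. by case: x. Qed.
Lemma cReM x y : complex.Re (x * y) = complex.Re x * complex.Re y - complex.Im x * complex.Im y. Proof. by case: x; case: y. Qed.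
Lemma cImM x y : complex.Im (x * y) = complex.Re x * complex.Im y + complex.Im x * complex.Re y. Proof. by case: x; case: y. Qed.
Lemma cReC (r : R) : complex.Re (r%:C)%C = r. Proof. by []. Qed.
Lemma cImC (r : R) : complex.Im (r%:C)%C = 0. Proof. by []. Qed.
Lemma cRei : complex.Re ('i%C : R[i]) = 0. Proof. by []. Qed.
Lemma cImi : complex.Im ('i%C : R[i]) = 1. Proof. by []. Qed.
Lemma cRe0 : complex.Re (0 : R[i]) = 0. Proof. by []. Qed.
Lemma cIm0 : complex.Im (0 : R[i]) = 0. Proof. by []. Qed.

Lemma detA1 (nu F : R) : \det (svA1 nu F) = (svQ nu / svH nu - svs nu) * ((- svs nu) * (2 * svQ nu / svH nu - svs nu) - (svH nu / F ^+ 2 - svQ nu ^+ 2 / svH nu ^+ 2)).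
Proof.
rewrite (expand_det_row _ ord0) !big_ord_recl big_ord0 /cofactor !mxE /=.
rewrite !(expand_det_row _ ord0) !big_ord_recl !big_ord0 /cofactor !mxE /= ?det_mx00.
rewrite !(expand_det_row _ ord0) !big_ord_recl !big_ord0 /cofactor !mxE /= ?det_mx00.
rewrite /bump /= ?add0n ?expr0 ?expr1 ?mul1r ?mulr1. ring.
Qed.

Lemma consts (nu F : R) : nu != 0 ->
  [/\ svQ nu / svH nu = nu^-1, 2 * svQ nu ^+ 2 / svH nu ^+ 3 + 1 = 3,
      2 * svQ nu / svH nu ^+ 2 = 2 * nu, svQ nu / svH nu ^+ 2 = nu &
      svQ nu ^+ 2 / svH nu ^+ 2 = (nu^-1) ^+ 2].
Proof.
move=> h; rewrite /svQ /svH; split; field; rewrite ?expf_neq0 //.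
Qed.

Lemma eig_vec (nu F : R) (lambda : R[i]) (eta : R) (gam : R[i]) :
  \det (svA1 nu F) != 0 ->
  eigenvalue (Gplus nu F lambda eta) gam ->
  exists2 v : 'rV[R[i]]_3,
   v *m (map_mx (fun x : R => x%:C%C) (svE nu) - lambda%:M - ('i%C * (eta%:C)%C) *: map_mx (fun x : R => x%:C%C) (svA2 nu F))
  = gam *: (v *m map_mx (fun x : R => x%:C%C) (svA1 nu F)) & v != 0.
Proof.
move=> hdet /eigenvalueP [v hv v0]; exists v => //.
have hu : map_mx (fun x : R => x%:C%C) (svA1 nu F) \in unitmx.
  by rewrite unitmxE (det_map_mx (real_complex R)) unitfE fmorph_eq0.
move: hv; rewrite /Gplus mulmxA => /(congr1 (mulmx^~ (map_mx (fun x : R => x%:C%C) (svA1 nu F)))).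
by rewrite mulmxKV // -scalemxAl.
Qed.

Definition FA (s q a z0 z1 z2 : R) :=
  (q - s) * z0^+2 + 2 * (a + q^+2 - s * q) * z0 * z1
  + (3 * q * a + q^+3 - s * a - s * q^+2) * z1^+2 + (q - s) * a * z2^+2.
Definition PP (q a z0 z1 z2 : R) := z0^+2 + 2 * q * z0 * z1 + (a + q^+2) * z1^+2 + a * z2^+2.
Definition QE (q a nu z0 z1 z2 : R) :=
  (3 - 2 * nu * q) * z0 * z1 + (3 * q - 2 * nu * (a + q^+2)) * z1^+2 - nu * a * z2^+2.
Definition Kdef (s q a nu : R) :=
  let b := s - q in let m := q * b - a in let n11 := a * (b - 2 * q) + q^+2 * b in
  let D := b * n11 - m^+2 in let c01 := 3 - 2 * nu * q in
  let w := 3 * q - 2 * nu * (a + q^+2) in let L := b * w - m * c01 in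
  1 + (`|L| + c01^+2 + 1) / D.

Lemma psd2 (al be de z0 z1 : R) : 0 < al -> be^+2 <= 4 * al * de ->
  0 <= al * z0^+2 + be * z0 * z1 + de * z1^+2.
Proof.
move=> hal hb.
have h : 4 * al * (al * z0^+2 + be * z0 * z1 + de * z1^+2) =
   (2 * al * z0 + be * z1)^+2 + (4 * al * de - be^+2) * z1^+2 by ring.
have h2 : 0 <= 4 * al * (al * z0^+2 + be * z0 * z1 + de * z1^+2).
  by rewrite h; apply: addr_ge0; [exact: sqr_ge0 | apply: mulr_ge0; [lra | exact: sqr_ge0]].
by move: h2; rewrite pmulr_rge0 //; lra.
Qed.

Lemma N2pos (b m n11 z0 z1 : R) : 0 < b -> 0 < b * n11 - m^+2 ->
  0 <= b * z0^+2 + 2 * m * z0 * z1 + n11 * z1^+2 /\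
  (b * z0^+2 + 2 * m * z0 * z1 + n11 * z1^+2 = 0 -> z0 = 0 /\ z1 = 0).
Proof.
move=> hb hD.
have h : b * (b * z0^+2 + 2 * m * z0 * z1 + n11 * z1^+2) =
   (b * z0 + m * z1)^+2 + (b * n11 - m^+2) * z1^+2 by ring.
have s1 := sqr_ge0 (b * z0 + m * z1). have s2 := sqr_ge0 z1.
split.
  have : 0 <= b * (b * z0^+2 + 2 * m * z0 * z1 + n11 * z1^+2) by rewrite h; nra.
  by rewrite pmulr_rge0.
move=> h0; move: h; rewrite h0 mulr0 => h.
have hz1 : z1^+2 = 0 by nra.
have e1 : z1 = 0 by apply/eqP; rewrite -sqrf_eq0; apply/eqP.
move: h; rewrite e1 expr0n /= mulr0 addr0 mulr0 addr0 => /esym/eqP.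
rewrite sqrf_eq0 mulf_eq0 (gt_eqF hb) /= => /eqP; split=> //.
Qed.

Lemma final (s q a nu g1 l1 x0 y0 x1 y1 x2 y2 : R) :
 0 < a -> 0 < s - q -> a < (s - q)^+2 -> 0 < nu -> 0 <= l1 ->
 0 < x0^+2 + y0^+2 + x1^+2 + y1^+2 + x2^+2 + y2^+2 ->
 g1 * (FA s q a x0 x1 x2 + FA s q a y0 y1 y2) + l1 * (PP q a x0 x1 x2 + PP q a y0 y1 y2)
   - (QE q a nu x0 x1 x2 + QE q a nu y0 y1 y2) = 0 ->
 - Kdef s q a nu <= g1.
Proof.
rewrite /Kdef /FA /PP /QE.
set b := s - q.
move=> ha hb hba hnu hl hS key.
cbv zeta.
set m := q * b - a. set n11 := a * (b - 2 * q) + q^+2 * b.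
set c01 := 3 - 2 * nu * q. set w := 3 * q - 2 * nu * (a + q^+2).
set L := b * w - m * c01.
have eD : b * n11 - m^+2 = a * (b^+2 - a) by rewrite /n11 /m; ring.
set D := b * n11 - m^+2.
have hD : 0 < D by rewrite /D eD; apply: mulr_gt0 => //; lra.
set K := 1 + _.
have hK1 : 1 <= K.
  have : 0 <= (`|L| + c01^+2 + 1) / D.
    apply: divr_ge0; last lra.
    have := normr_ge0 L; have := sqr_ge0 c01; lra.
  rewrite /K; lra.
have hKD : `|L| + c01^+2 + 1 <= K * D.
  rewrite /K mulrDl mul1r mulfVK; last by rewrite gt_eqF.
  lra.
have hLL : L <= `|L| := ler_norm L.
have hdisc : (2 * K * m - c01)^+2 <= 4 * (K * b) * (K * n11 - w).
  have e : 4 * (K * b) * (K * n11 - w) - (2 * K * m - c01)^+2 =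
     4 * K * (K * D) - 4 * K * L - c01^+2 by rewrite /D /L; ring.
  rewrite -subr_ge0 e.
  have hc := sqr_ge0 c01.
  nra.
have hKb : 0 < K * b by apply: mulr_gt0 => //; lra.
have psdz : forall z0 z1 z2 : R,
  0 <= K * (b * z0^+2 + 2 * m * z0 * z1 + n11 * z1^+2 + b * a * z2^+2)
        - ((3 - 2 * nu * q) * z0 * z1 + (3 * q - 2 * nu * (a + q^+2)) * z1^+2 - nu * a * z2^+2).
  move=> z0 z1 z2.
  have p := @psd2 (K * b) (2 * K * m - c01) (K * n11 - w) z0 z1 hKb hdisc.
  have e : K * (b * z0^+2 + 2 * m * z0 * z1 + n11 * z1^+2 + b * a * z2^+2)
        - ((3 - 2 * nu * q) * z0 * z1 + (3 * q - 2 * nu * (a + q^+2)) * z1^+2 - nu * a * z2^+2)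
     = (K * b * z0^+2 + (2 * K * m - c01) * z0 * z1 + (K * n11 - w) * z1^+2) + (K * b + nu) * a * z2^+2
    by rewrite /c01 /w; ring.
  rewrite e; apply: addr_ge0 => //; apply: mulr_ge0; [apply: mulr_ge0 | exact: sqr_ge0]; lra.
have Pz : forall z0 z1 z2 : R, 0 <= z0^+2 + 2 * q * z0 * z1 + (a + q^+2) * z1^+2 + a * z2^+2.
  move=> z0 z1 z2.
  have -> : z0^+2 + 2 * q * z0 * z1 + (a + q^+2) * z1^+2 + a * z2^+2 = (z0 + q * z1)^+2 + a * z1^+2 + a * z2^+2 by ring.
  have := sqr_ge0 (z0 + q * z1); have := sqr_ge0 z1; have := sqr_ge0 z2; nra.
have [Nx0 Nx1] := @N2pos b m n11 x0 x1 hb hD.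
have [Ny0 Ny1] := @N2pos b m n11 y0 y1 hb hD.
set Nx := b * x0^+2 + 2 * m * x0 * x1 + n11 * x1^+2 in Nx0 Nx1.
set Ny := b * y0^+2 + 2 * m * y0 * y1 + n11 * y1^+2 in Ny0 Ny1.
set N := Nx + Ny + b * a * (x2^+2 + y2^+2).
have eFA : forall z0 z1 z2 : R, (q - s) * z0^+2 + 2 * (a + q^+2 - s * q) * z0 * z1
  + (3 * q * a + q^+3 - s * a - s * q^+2) * z1^+2 + (q - s) * a * z2^+2 =
  - (b * z0^+2 + 2 * m * z0 * z1 + n11 * z1^+2 + b * a * z2^+2)
  by move=> z0 z1 z2; rewrite /m /n11 /b; ring.
rewrite !eFA in key.
have hN : 0 < N.
  rewrite lt_def; apply/andP; split; last first.
    rewrite /N; have := sqr_ge0 x2; have := sqr_ge0 y2; have : 0 < b * a by apply: mulr_gt0.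
    nra.
  apply/eqP => N0.
  have ex2 : b * a * (x2^+2 + y2^+2) = 0.
    have := sqr_ge0 x2; have := sqr_ge0 y2; have : 0 < b * a by apply: mulr_gt0.
    rewrite /N in N0. nra.
  have eNx : Nx = 0.
    have := sqr_ge0 x2; have := sqr_ge0 y2; have : 0 < b * a by apply: mulr_gt0.
    rewrite /N in N0. nra.
  have eNy : Ny = 0 by rewrite /N eNx ex2 in N0; lra.
  have [ex0 ex1] := Nx1 eNx. have [ey0 ey1] := Ny1 eNy.
  have : x2^+2 + y2^+2 = 0.
    move: ex2 => /eqP; rewrite mulf_eq0 mulf_eq0 (gt_eqF hb) (gt_eqF ha) /=; by move/eqP.
  move: hS; rewrite ex0 ex1 ey0 ey1 expr0n /=; lra.
have Px := Pz x0 x1 x2. have Py := Pz y0 y1 y2.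
have kx := psdz x0 x1 x2. have ky := psdz y0 y1 y2.
have hP : 0 <= l1 * (x0^+2 + 2 * q * x0 * x1 + (a + q^+2) * x1^+2 + a * x2^+2 + (y0^+2 + 2 * q * y0 * y1 + (a + q^+2) * y1^+2 + a * y2^+2)).
  by apply: mulr_ge0 => //; lra.
have hgN : 0 <= (g1 + K) * N.
  have -> : (g1 + K) * N = g1 * N + K * N by ring.
  have eN : K * N = K * (b * x0^+2 + 2 * m * x0 * x1 + n11 * x1^+2 + b * a * x2^+2) + K * (b * y0^+2 + 2 * m * y0 * y1 + n11 * y1^+2 + b * a * y2^+2)
    by rewrite /N /Nx /Ny; ring.
  have eg : g1 * N = - (g1 * (- (b * x0^+2 + 2 * m * x0 * x1 + n11 * x1^+2 + b * a * x2^+2) + - (b * y0^+2 + 2 * m * y0 * y1 + n11 * y1^+2 + b * a * y2^+2)))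
    by rewrite /N /Nx /Ny; ring.
  rewrite eN eg; lra.
move: hgN; rewrite pmulr_lge0 //; lra.
Qed.

Lemma c0 : ((0 : R)%:C)%C = 0 :> R[i]. Proof. by []. Qed.
Lemma cplx0 (z : R[i]) : complex.Re z = 0 -> complex.Im z = 0 -> z = 0.
Proof. by case: z => a b /= -> ->. Qed.

Lemma realfacts (nu F : R) : 1 < nu -> 2 < F ->
  [/\ 0 < svH nu / F ^+ 2, 0 < svs nu - svQ nu / svH nu &
      svH nu / F ^+ 2 < (svs nu - svQ nu / svH nu) ^+ 2].
Proof.
move=> hnu hF.
have n0 : nu != 0 by rewrite gt_eqF //; lra.
have n1 : nu + 1 != 0 by rewrite gt_eqF //; lra.
have F0 : F != 0 by rewrite gt_eqF //; lra.
have [hq _ _ _ _] := consts nu F n0.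
have eb : svs nu - svQ nu / svH nu = nu / (nu + 1).
  by rewrite hq /svs; field; rewrite n0 n1.
have ea : svH nu / F ^+ 2 = 1 / (nu ^+ 2 * F ^+ 2).
  by rewrite /svH; field; rewrite n0 F0.
rewrite eb ea; split.
- apply: divr_gt0; first lra. apply: mulr_gt0; apply: exprn_gt0; lra.
- apply: divr_gt0; lra.
- have e : (nu / (nu + 1)) ^+ 2 - 1 / (nu ^+ 2 * F ^+ 2) =
     (nu ^+ 4 * F ^+ 2 - (nu + 1) ^+ 2) / ((nu + 1) ^+ 2 * (nu ^+ 2 * F ^+ 2)).
    by field; rewrite n0 n1 F0.
  rewrite -subr_gt0 e; apply: divr_gt0.
    have h1 : nu + 1 < nu ^+ 2 * F by nra.
    have h2 : 0 < nu + 1 by lra.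
    have -> : nu ^+ 4 * F ^+ 2 - (nu + 1) ^+ 2 = (nu ^+ 2 * F - (nu + 1)) * (nu ^+ 2 * F + (nu + 1)) by ring.
    apply: mulr_gt0; lra.
  apply: mulr_gt0; first (apply: exprn_gt0; lra).
  apply: mulr_gt0; apply: exprn_gt0; lra.
Qed.

Arguments realfacts {nu F}.
Arguments cplx0 {z}.
Lemma detA1_neq0 (nu F : R) : 1 < nu -> 2 < F -> \det (svA1 nu F) != 0.
Proof.
move=> hnu hF; have [ha hb hba] := realfacts hnu hF.
rewrite detA1 -expr_div_n.
set q := svQ nu / svH nu in hb hba *. set s := svs nu in hb hba *. set a := svH nu / F ^+ 2 in ha hba *.
have -> : 2 * svQ nu / svH nu = 2 * q by rewrite /q mulrA.
have -> : (q - s) * (- s * (2 * q - s) - (a - q ^+ 2)) = - ((s - q) * ((s - q) ^+ 2 - a)) by ring.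
rewrite oppr_eq0 mulf_eq0 negb_or; apply/andP; split; rewrite gt_eqF //; lra.
Qed.

Arguments detA1_neq0 {nu F}.
Arguments eig_vec {nu F lambda eta gam}.
Arguments final {s q a nu g1 l1 x0 y0 x1 y1 x2 y2}.
Ltac mkkey q a r0 i0 r1 i1 r2 i2 x0 y0 x1 y1 x2 y2 :=
  lazymatch type of r0 with ?A0 = ?B0 =>
  lazymatch type of i0 with ?C0 = ?D0 =>
  lazymatch type of r1 with ?A1 = ?B1 =>
  lazymatch type of i1 with ?C1 = ?D1 =>
  lazymatch type of r2 with ?A2 = ?B2 =>
  lazymatch type of i2 with ?C2 = ?D2 =>
  constr:((B0 - A0) * (x0 + q * x1) + (D0 - C0) * (y0 + q * y1)
     + (B1 - A1) * (q * x0 + (a + q ^+ 2) * x1) + (D1 - C1) * (q * y0 + (a + q ^+ 2) * y1)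
     + (B2 - A2) * (a * x2) + (D2 - C2) * (a * y2))
  end end end end end end.

Lemma bound_eig (nu F : R) (lambda : R[i]) (eta : R) (gam : R[i]) :
  1 < nu -> 2 < F -> 0 <= complex.Re lambda ->
  eigenvalue (Gplus nu F lambda eta) gam ->
  - Kdef (svs nu) (svQ nu / svH nu) (svH nu / F ^+ 2) nu <= complex.Re gam.
Proof.
move=> hnu hF hl heig.
have n0 : nu != 0 by rewrite gt_eqF //; lra.
have [hq he10 he11 he22 hq2] := consts nu F n0.
have [ha hb hba] := realfacts hnu hF.
have [v H vn0] := eig_vec (detA1_neq0 hnu hF) heig.
have hS : 0 < (complex.Re (v ord0 ord0))^+2 + (complex.Im (v ord0 ord0))^+2
   + (complex.Re (v ord0 (lift ord0 ord0)))^+2 + (complex.Im (v ord0 (lift ord0 ord0)))^+2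
   + (complex.Re (v ord0 (lift ord0 (lift ord0 ord0))))^+2 + (complex.Im (v ord0 (lift ord0 (lift ord0 ord0))))^+2.
  set e1 := complex.Re _; set e2 := complex.Im _; set e3 := complex.Re _; set e4 := complex.Im _;
  set e5 := complex.Re _; set e6 := complex.Im _.
  rewrite lt_def; apply/andP; split; last first.
    have := sqr_ge0 e1; have := sqr_ge0 e2; have := sqr_ge0 e3;
    have := sqr_ge0 e4; have := sqr_ge0 e5; have := sqr_ge0 e6; lra.
  apply/negP => /eqP hz; move/negP: vn0; apply; apply/eqP.
  have q1 := sqr_ge0 e1; have q2 := sqr_ge0 e2; have q3 := sqr_ge0 e3;
  have q4 := sqr_ge0 e4; have q5 := sqr_ge0 e5; have q6 := sqr_ge0 e6.
  have z1 : e1 = 0 by apply/eqP; rewrite -sqrf_eq0; apply/eqP; lra.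
  have z2 : e2 = 0 by apply/eqP; rewrite -sqrf_eq0; apply/eqP; lra.
  have z3 : e3 = 0 by apply/eqP; rewrite -sqrf_eq0; apply/eqP; lra.
  have z4 : e4 = 0 by apply/eqP; rewrite -sqrf_eq0; apply/eqP; lra.
  have z5 : e5 = 0 by apply/eqP; rewrite -sqrf_eq0; apply/eqP; lra.
  have z6 : e6 = 0 by apply/eqP; rewrite -sqrf_eq0; apply/eqP; lra.
  have V0 := cplx0 z1 z2. have V1 := cplx0 z3 z4. have V2 := cplx0 z5 z6.
  apply/rowP => j; rewrite mxE.
  have [->|[->|->]] : j = ord0 \/ j = lift ord0 ord0 \/ j = lift ord0 (lift ord0 ord0).
    case: j => [[|[|[|k]]] hj]; [left|right;left|right;right|by []]; exact: val_inj.
  - exact: V0.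
  - exact: V1.
  - exact: V2.
have h0 := congr1 (fun A : 'M_(1,3) => A ord0 (@Ordinal 3 0 isT)) H.
have h1 := congr1 (fun A : 'M_(1,3) => A ord0 (@Ordinal 3 1 isT)) H.
have h2 := congr1 (fun A : 'M_(1,3) => A ord0 (@Ordinal 3 2 isT)) H.
move: h0 h1 h2; rewrite /= !mxE !big_ord_recl !big_ord0 !mxE /= !mulr1n !mulr0n.
move: hS.
move: (v ord0 ord0) (v ord0 (lift ord0 ord0)) (v ord0 (lift ord0 (lift ord0 ord0))) => w0 w1 w2 hS h0 h1 h2.
clear H vn0.
rewrite he10 he11 he22 -expr_div_n !c0 in h0 h1 h2.
have r0 := congr1 (@complex.Re R) h0. have i0 := congr1 (@complex.Im R) h0.
have r1 := congr1 (@complex.Re R) h1. have i1 := congr1 (@complex.Im R) h1.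
have r2 := congr1 (@complex.Re R) h2. have i2 := congr1 (@complex.Im R) h2.
clear h0 h1 h2.
rewrite !(cReD, cReN, cReM, cImD, cImN, cImM) in r0.
rewrite !(cReD, cReN, cReM, cImD, cImN, cImM) in i0.
rewrite !(cReD, cReN, cReM, cImD, cImN, cImM) in r1.
rewrite !(cReD, cReN, cReM, cImD, cImN, cImM) in i1.
rewrite !(cReD, cReN, cReM, cImD, cImN, cImM) in r2.
rewrite !(cReD, cReN, cReM, cImD, cImN, cImM) in i2.
rewrite ?(cReC, cImC, cRei, cImi, cRe0, cIm0) in r0 i0 r1 i1 r2 i2.
have zR : Algebra.hasZero.zero (Algebra.BaseAddUMagma.class R) = 0 :> R by [].
rewrite ?zR in r0 i0 r1 i1 r2 i2.
set q := svQ nu / svH nu in r0 i0 r1 i1 r2 i2 hb hba *.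
set a := svH nu / F ^+ 2 in r0 i0 r1 i1 r2 i2 ha hba *.
set s := svs nu in r0 i0 r1 i1 r2 i2 hb hba *.
let k := mkkey q a r0 i0 r1 i1 r2 i2 (complex.Re w0) (complex.Im w0) (complex.Re w1) (complex.Im w1) (complex.Re w2) (complex.Im w2) in
have key : complex.Re gam * (FA s q a (complex.Re w0) (complex.Re w1) (complex.Re w2) + FA s q a (complex.Im w0) (complex.Im w1) (complex.Im w2))
   + complex.Re lambda * (PP q a (complex.Re w0) (complex.Re w1) (complex.Re w2) + PP q a (complex.Im w0) (complex.Im w1) (complex.Im w2))
   - (QE q a nu (complex.Re w0) (complex.Re w1) (complex.Re w2) + QE q a nu (complex.Im w0) (complex.Im w1) (complex.Im w2)) = k.
  rewrite /FA /PP /QE /q /a /s. ring.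
rewrite r0 i0 r1 i1 r2 i2 !subrr !mul0r !addr0 in key.
have hnu0 : 0 < nu by lra.

exact: (final ha hb hba hnu0 hl hS key).
Qed.

End Aux.

Theorem mainTheorem4 (R : rcfType) (nu F : R) (hnu : 1 < nu) (hF : 2 < F) :
  exists C : R,
    forall (lambda : R[i]) (eta : R),
      0 <= complex.Re lambda ->
      forall gamma1 : R[i],
        eigenvalue (Gplus nu F lambda eta) gamma1 ->
        (forall gamma : R[i], eigenvalue (Gplus nu F lambda eta) gamma ->
            complex.Re gamma1 <= complex.Re gamma) ->
        C <= complex.Re gamma1.
Proof.
exists (- @Kdef R (svs nu) (svQ nu / svH nu) (svH nu / F ^+ 2) nu).
move=> lambda eta hl gamma1 heig _.
exact: (@bound_eig R nu F lambda eta gamma1 hnu hF hl heig).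
Qed.
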